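(* Let $E$ be a Banach lattice such that the lattice operations in $E'$ are weak* sequentially continuous, i.e. $x_n' \to 0$ weak* in $E'$ implies $|x_n'| \to 0$ weak* in $E'$. Let $A \subset E$. Then $|A| = \{|x| : x \in A\}$ is a Grothendieck set if and only if the solid hull $\mathrm{sol}(A)$ is a Grothendieck set.
   Context: A subset $A$ of a Banach space $X$ is a Grothendieck set if $T(A)$ is relatively weakly compact in $c_0$ for every bounded linear operator $T: X \to c_0$. The solid hull is $\mathrm{sol}(A) = \{x \in E : |x| \le |y| \text{ for some } y \in A\}$. *)

(* Defs.v *)
From HB Require Import structures.
From mathcomp Require Import all_boot all_order all_algebra.
From mathcomp Require Import all_classical all_reals all_analysis.

Set Implicit Arguments.
Unset Strict Implicit.
Unset Printing Implicit Defensive.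

Import Order.TTheory GRing.Theory Num.Theory.
Import numFieldNormedType.Exports.

Local Open Scope classical_set_scope.
Local Open Scope ring_scope.

Definition lat_abs {R : realType} {E : completeNormedModType R}
  (join : E -> E -> E) (x : E) : E := join x (- x).

Record banach_lattice {R : realType} {E : completeNormedModType R}
    (le : E -> E -> Prop) (join : E -> E -> E) : Prop := BanachLattice {
  bl_refl : forall x, le x x;
  bl_antisym : forall x y, le x y -> le y x -> x = y;
  bl_trans : forall x y z, le x y -> le y z -> le x z;
  bl_join_ubl : forall x y, le x (join x y);
  bl_join_ubr : forall x y, le y (join x y);
  bl_join_least : forall x y z, le x z -> le y z -> le (join x y) z;
  bl_add : forall x y z, le x y -> le (x + z) (y + z);
  bl_scale : forall (a : R) x, 0 <= a -> le 0 x -> le 0 (a *: x);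
  bl_norm : forall x y, le (lat_abs join x) (lat_abs join y) -> `|x| <= `|y|
}.

Definition solid_hull {R : realType} {E : completeNormedModType R}
  (le : E -> E -> Prop) (join : E -> E -> E) (A : set E) : set E :=
  [set x | exists2 y, A y & le (lat_abs join x) (lat_abs join y)].

(* The norm dual E' and its lattice modulus (Riesz--Kantorovich formula).   *)

Definition dual_elem {R : realType} {E : completeNormedModType R}
  (f : E -> R) : Prop :=
  [/\ forall x y, f (x + y) = f x + f y,
      forall (a : R) x, f (a *: x) = a * f x &
      continuous f].

Definition dual_abs_pos {R : realType} {E : completeNormedModType R}
  (le : E -> E -> Prop) (join : E -> E -> E) (f : E -> R) (x : E) : R :=
  sup [set f y | y in [set y | le (lat_abs join y) x]].

Definition dual_abs {R : realType} {E : completeNormedModType R}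
  (le : E -> E -> Prop) (join : E -> E -> E) (f : E -> R) (x : E) : R :=
  dual_abs_pos le join f (join x 0) - dual_abs_pos le join f (join (- x) 0).

Definition dual_lattice_weakstar_seq_cont {R : realType}
  {E : completeNormedModType R} (le : E -> E -> Prop) (join : E -> E -> E)
  : Prop :=
  forall f : nat -> E -> R, (forall n, dual_elem (f n)) ->
    (forall x, f n x @[n --> \oo] --> 0) ->
    (forall x, dual_abs le join (f n) x @[n --> \oo] --> 0).

Record c0 (R : realType) := C0 {
  c0val :> nat -> R;
  c0valP : `[< c0val n @[n --> \oo] --> 0 >]
}.

HB.instance Definition _ (R : realType) := [isSub for @c0val R].
HB.instance Definition _ (R : realType) := [Choice of c0 R by <:].

Definition c0norm {R : realType} (u : c0 R) : R :=
  sup [set `|c0val u n| | n in [set: nat]].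

Definition c0_dual_elem {R : realType} (phi : c0 R -> R) : Prop :=
  [/\ forall u v : c0 R, forall a : R, forall w : c0 R,
        (forall n, c0val w n = a * c0val u n + c0val v n) ->
        phi w = a * phi u + phi v &
      exists C : R, forall u, `|phi u| <= C * c0norm u].

Definition c0_dual (R : realType) := {phi : c0 R -> R | c0_dual_elem phi}.

Definition c0_weak (R : realType) :=
  sup_topology (fun phi : c0_dual R =>
    Topological.class (initial_topology (proj1_sig phi))).

Definition rel_weakly_compact_c0 {R : realType} (S : set (c0 R)) : Prop :=
  compact (closure (S : set (c0_weak R))).

Definition bounded_op_c0 {R : realType} {E : completeNormedModType R}
  (T : E -> c0 R) : Prop :=
  [/\ forall x y n, c0val (T (x + y)) n = c0val (T x) n + c0val (T y) n,
      forall (a : R) x n, c0val (T (a *: x)) n = a * c0val (T x) n &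
      exists C : R, forall x, c0norm (T x) <= C * `|x| ].

Definition grothendieck_set {R : realType} {E : completeNormedModType R}
  (A : set E) : Prop :=
  forall T : E -> c0 R, bounded_op_c0 T -> rel_weakly_compact_c0 (T @` A).

(* Main.v *)
Require Import Defs.
From HB Require Import structures.
From mathcomp Require Import all_boot all_order all_algebra.
From mathcomp Require Import all_classical all_reals all_analysis.
From mathcomp.algebra_tactics Require Import ring lra.
Import Order.TTheory GRing.Theory Num.Theory.
Import numFieldNormedType.Exports.
Local Open Scope classical_set_scope.
Local Open Scope ring_scope.
Set Implicit Arguments.
Unset Strict Implicit.
Unset Printing Implicit Defensive.
Section Lat.
Variable R : realType.
Variable E : completeNormedModType R.
Variable le : E -> E -> Prop.
Variable join : E -> E -> E.
Hypothesis HBL : banach_lattice le join.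
Local Notation abs := (lat_abs join).
Local Notation "x <=L y" := (le x y) (at level 70).

Lemma lrefl x : x <=L x. Proof. exact: (bl_refl HBL). Qed.
Lemma ltrans x y z : x <=L y -> y <=L z -> x <=L z. Proof. exact: (bl_trans HBL). Qed.
Lemma lanti x y : x <=L y -> y <=L x -> x = y. Proof. exact: (bl_antisym HBL). Qed.
Lemma jl x y : x <=L join x y. Proof. exact: (bl_join_ubl HBL). Qed.
Lemma jr x y : y <=L join x y. Proof. exact: (bl_join_ubr HBL). Qed.
Lemma jlub x y z : x <=L z -> y <=L z -> join x y <=L z. Proof. exact: (bl_join_least HBL). Qed.
Lemma ladd x y z : x <=L y -> x + z <=L y + z. Proof. exact: (bl_add HBL). Qed.

Lemma laddl x y z : x <=L y -> z + x <=L z + y.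
Proof. by move=> H; rewrite ![z + _]addrC; exact: ladd. Qed.

Lemma ladd2 a b c d : a <=L b -> c <=L d -> a + c <=L b + d.
Proof. by move=> H1 H2; apply: ltrans (ladd c H1) (laddl b H2). Qed.

Lemma lneg x y : x <=L y -> - y <=L - x.
Proof.
move=> H; have := ladd (- x - y) H.
by rewrite addrA subrr add0r addrCA subrr addr0.
Qed.

Lemma lsub0 x y : x <=L y -> 0 <=L y - x.
Proof. by move=> H; have := ladd (- x) H; rewrite subrr. Qed.

Lemma lsub0' x y : 0 <=L y - x -> x <=L y.
Proof. by move=> H; have := ladd x H; rewrite add0r subrK. Qed.

Lemma lscale (a : R) x y : 0 <= a -> x <=L y -> a *: x <=L a *: y.
Proof.
move=> a0 H; apply: lsub0'; rewrite -scalerBr; apply: (bl_scale HBL) => //.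
exact: lsub0.
Qed.

Lemma lscale0 (a : R) x : 0 <= a -> 0 <=L x -> 0 <=L a *: x.
Proof. exact: (bl_scale HBL). Qed.

Lemma jC x y : join x y = join y x.
Proof. by apply: lanti; apply: jlub; first [exact: jr | exact: jl]. Qed.

Lemma le_abs x : x <=L abs x. Proof. exact: jl. Qed.
Lemma leN_abs x : - x <=L abs x. Proof. exact: jr. Qed.

Lemma abs_lub x z : x <=L z -> - x <=L z -> abs x <=L z.
Proof. exact: jlub. Qed.

Lemma abs_ge0 x : 0 <=L abs x.
Proof.
have H := ladd2 (le_abs x) (leN_abs x); rewrite subrr in H.
have h2 : (0 : R) <= 2^-1 by rewrite invr_ge0 ler0n.
have := lscale0 h2 H.
have E2 : (2^-1 : R) + 2^-1 = 1 by lra.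
by rewrite scalerDr -scalerDl E2 scale1r.
Qed.

Lemma abs_pos x : 0 <=L x -> abs x = x.
Proof.
move=> H; apply: lanti; last exact: le_abs.
apply: abs_lub; first exact: lrefl.
apply: ltrans (lneg H) _; rewrite oppr0; exact: H.
Qed.

Lemma abs_abs x : abs (abs x) = abs x.
Proof. exact: abs_pos (abs_ge0 x). Qed.

Lemma absN x : abs (- x) = abs x.
Proof. by rewrite /lat_abs opprK jC. Qed.

Lemma abs0 : abs 0 = 0.
Proof. by apply: abs_pos; exact: lrefl. Qed.

Lemma abs_le0 y : abs y <=L 0 -> y = 0.
Proof.
move=> H; apply: lanti; first exact: ltrans (le_abs y) H.
have := lneg (ltrans (leN_abs y) H); by rewrite opprK oppr0.
Qed.

Lemma abs_le_iff y x : abs y <=L x -> y <=L x /\ - y <=L x.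
Proof. by move=> H; split; apply: ltrans H; [exact: le_abs | exact: leN_abs]. Qed.

Lemma abs_tri x y : abs (x + y) <=L abs x + abs y.
Proof.
apply: abs_lub; first exact: ladd2 (le_abs x) (le_abs y).
by rewrite opprD; exact: ladd2 (leN_abs x) (leN_abs y).
Qed.

Lemma abs_scale (a : R) x : 0 <= a -> abs (a *: x) = a *: abs x.
Proof.
rewrite le_eqVlt => /orP [/eqP <-|a0].
  by rewrite !scale0r abs0.
apply: lanti.
  apply: abs_lub; first exact: lscale (ltW a0) (le_abs x).
  by rewrite -scalerN; exact: lscale (ltW a0) (leN_abs x).
have ia0 : 0 <= a^-1 by rewrite invr_ge0 ltW.
have H : abs x <=L a^-1 *: abs (a *: x).
  apply: abs_lub.
    have := lscale ia0 (le_abs (a *: x)).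
    by rewrite scalerA mulVf ?gt_eqF // scale1r.
  have := lscale ia0 (leN_abs (a *: x)).
  by rewrite -scalerN scalerA mulVf ?gt_eqF // scale1r.
have := lscale (ltW a0) H.
by rewrite scalerA mulfV ?gt_eqF // scale1r.
Qed.

Definition meet x y := - join (- x) (- y).
Lemma ml x y : meet x y <=L x.
Proof. by rewrite /meet -{2}(opprK x); apply: lneg; exact: jl. Qed.
Lemma mr x y : meet x y <=L y.
Proof. by rewrite /meet -{2}(opprK y); apply: lneg; exact: jr. Qed.
Lemma mglb x y z : z <=L x -> z <=L y -> z <=L meet x y.
Proof.
move=> H1 H2; rewrite /meet -(opprK z); apply: lneg.
by apply: jlub; apply: lneg.
Qed.

Lemma join_tr a b c : join (a + c) (b + c) = join a b + c.
Proof.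
apply: lanti.
  by apply: jlub; apply: ladd; [exact: jl | exact: jr].
have H : join a b <=L join (a + c) (b + c) - c.
  apply: jlub.
    by have := ladd (- c) (jl (a + c) (b + c)); rewrite addrK.
  by have := ladd (- c) (jr (a + c) (b + c)); rewrite addrK.
by have := ladd c H; rewrite subrK.
Qed.

Definition pp x := join x 0.
Definition np x := join (- x) 0.

Lemma pp_ge0 x : 0 <=L pp x. Proof. exact: jr. Qed.
Lemma np_ge0 x : 0 <=L np x. Proof. exact: jr. Qed.

Lemma ppnp x : pp x - np x = x.
Proof.
have -> : np x = pp x - x.
  by rewrite /np /pp -(join_tr x 0 (- x)) subrr add0r jC.
by rewrite opprB addrC subrK.
Qed.

Lemma pp_le_abs x : pp x <=L abs x.
Proof. by apply: jlub; [exact: le_abs | exact: abs_ge0]. Qed.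
Lemma np_le_abs x : np x <=L abs x.
Proof. by apply: jlub; [exact: leN_abs | exact: abs_ge0]. Qed.

Lemma riesz y x1 x2 : 0 <=L x1 -> 0 <=L x2 -> abs y <=L x1 + x2 ->
  exists y1 y2, [/\ y = y1 + y2, abs y1 <=L x1 & abs y2 <=L x2].
Proof.
move=> H1 H2 Hy; have [Hy1 Hy2] := abs_le_iff Hy.
pose y1 := join (meet y x1) (- x1).
have nx1 : - x1 <=L x1 by apply: ltrans (lneg H1) _; rewrite oppr0.
exists y1, (y - y1); split; first by rewrite addrC subrK.
  apply: abs_lub; first by apply: jlub; [exact: mr | exact: nx1].
  by have := lneg (jr (meet y x1) (- x1)); rewrite opprK.
apply: abs_lub.
  apply: lsub0'; rewrite opprB addrA; apply: lsub0.
  have H : y - x2 <=L y1.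
    apply: ltrans (jl _ _); apply: mglb.
      by have := ladd2 (lrefl y) (lneg H2); rewrite oppr0 addr0.
    by have := ladd (- x2) Hy1; rewrite addrK.
  by have := ladd x2 H; rewrite subrK addrC.
rewrite opprB.
have H : y1 <=L y + x2.
  apply: jlub.
    apply: ltrans (ml y x1) _.
    by have := ladd2 (lrefl y) H2; rewrite addr0.
  by have := ladd x2 (lneg Hy2); rewrite opprK opprD -addrA addNr addr0.
by have := ladd (- y) H; rewrite [y + x2]addrC addrK.
Qed.
End Lat.
Section Func.
Variable R : realType.
Variable E : completeNormedModType R.
Variable le : E -> E -> Prop.
Variable join : E -> E -> E.
Hypothesis HBL : banach_lattice le join.
Local Notation abs := (lat_abs join).
Local Notation "x <=L y" := (le x y) (at level 70).
Variable f : E -> R.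
Hypothesis fadd : forall x y, f (x + y) = f x + f y.
Hypothesis fscal : forall (a : R) x, f (a *: x) = a * f x.
Variable K : R.
Hypothesis K0 : 0 <= K.
Hypothesis fbnd : forall x, `|f x| <= K * `|x|.

Local Notation P := (dual_abs_pos le join f).

Lemma f0 : f 0 = 0.
Proof. by have := fscal 0 0; rewrite scale0r mul0r. Qed.
Lemma fN x : f (- x) = - f x.
Proof. by have := fscal (-1) x; rewrite scaleN1r mulN1r. Qed.

Lemma Pset_ne x : 0 <=L x -> [set f y | y in [set y | abs y <=L x]] !=set0.
Proof. by move=> H; exists (f 0), 0 => //=; rewrite (abs0 HBL). Qed.

Lemma Pset_ub x : 0 <=L x -> ubound [set f y | y in [set y | abs y <=L x]] (K * `|x|).
Proof.
move=> H _ [y Hy <-]; apply: le_trans (ler_norm _) _; apply: le_trans (fbnd y) _.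
apply: ler_wpM2l => //; apply: (bl_norm HBL); by rewrite (abs_pos HBL H).
Qed.

Lemma P_ub x y : 0 <=L x -> abs y <=L x -> f y <= P x.
Proof.
move=> H Hy; apply: ub_le_sup; first by exists (K * `|x|); exact: Pset_ub.
by exists y.
Qed.

Lemma P_le x M : 0 <=L x -> (forall y, abs y <=L x -> f y <= M) -> P x <= M.
Proof.
move=> H HM; apply: ge_sup; first exact: Pset_ne.
by move=> _ [y Hy <-]; exact: HM.
Qed.

Lemma P_ge0 x : 0 <=L x -> 0 <= P x.
Proof. by move=> H; rewrite -f0; apply: P_ub => //; rewrite (abs0 HBL). Qed.

Lemma P_leK x : 0 <=L x -> P x <= K * `|x|.
Proof. by move=> H; apply: ge_sup; [exact: Pset_ne | exact: Pset_ub]. Qed.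

Lemma P0 : P 0 = 0.
Proof.
have H0 : 0 <=L (0 : E) := lrefl HBL 0.
apply/eqP; rewrite eq_le (P_ge0 H0) andbT; apply: P_le => // y /(abs_le0 HBL) ->.
by rewrite f0.
Qed.

Lemma P_add x1 x2 : 0 <=L x1 -> 0 <=L x2 -> P (x1 + x2) = P x1 + P x2.
Proof.
move=> H1 H2; have H12 : 0 <=L x1 + x2 by have := ladd2 HBL H1 H2; rewrite addr0.
apply/eqP; rewrite eq_le; apply/andP; split.
  apply: P_le => // y Hy; have [y1 [y2 [-> Hy1 Hy2]]] := riesz HBL H1 H2 Hy.
  by rewrite fadd; apply: lerD; apply: P_ub.
rewrite -lerBrDr; apply: P_le => // y1 Hy1.
rewrite lerBrDr addrC -lerBrDr; apply: P_le => // y2 Hy2.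
rewrite lerBrDr addrC -fadd; apply: P_ub => //.
have h1 := abs_tri HBL y1 y2. have h2 := ladd2 HBL Hy1 Hy2. exact (ltrans HBL h1 h2).
Qed.

Lemma P_scale (a : R) x : 0 <= a -> 0 <=L x -> P (a *: x) = a * P x.
Proof.
rewrite le_eqVlt => /orP [/eqP <-|a0] H; first by rewrite scale0r P0 mul0r.
have Hax : 0 <=L a *: x by exact (lscale0 HBL (ltW a0) H).
apply/eqP; rewrite eq_le; apply/andP; split.
  apply: P_le => // y Hy.
  have -> : y = a *: (a^-1 *: y) by rewrite scalerA mulfV ?gt_eqF // scale1r.
  rewrite fscal ler_pM2l //; apply: P_ub => //.
  rewrite (abs_scale HBL) ?invr_ge0 ?(ltW a0) //.
  have ia : 0 <= a^-1 by rewrite invr_ge0 ltW.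
  have := lscale HBL ia Hy.
  by rewrite scalerA mulVf ?gt_eqF // scale1r.
rewrite mulrC -ler_pdivlMr //; apply: P_le => // y Hy.
rewrite ler_pdivlMr // mulrC -fscal; apply: P_ub => //.
by rewrite (abs_scale HBL) ?(ltW a0) //; exact (lscale HBL (ltW a0) Hy).
Qed.

Lemma dual_abs_diff p q x : 0 <=L p -> 0 <=L q -> x = p - q ->
  dual_abs le join f x = P p - P q.
Proof.
move=> Hp Hq Ex; rewrite /dual_abs.
have E1 : pp join x + q = p + np join x.
  have h : pp join x - np join x = p - q by rewrite (ppnp HBL x).
  by rewrite -[pp join x](subrK (np join x)) h addrAC subrK.
have Hpp := pp_ge0 HBL x; have Hnp := np_ge0 HBL x.
have := congr1 P E1; rewrite !P_add //.
move=> HH; change (P (pp join x) - P (np join x) = P p - P q); lra.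
Qed.

Local Notation DA := (dual_abs le join f).

Lemma DA_def x : DA x = P (pp join x) - P (np join x).
Proof. by []. Qed.

Lemma DA_add x y : DA (x + y) = DA x + DA y.
Proof.
have H1 := pp_ge0 HBL x; have H2 := np_ge0 HBL x.
have H3 := pp_ge0 HBL y; have H4 := np_ge0 HBL y.
have Hp : 0 <=L pp join x + pp join y by have := ladd2 HBL H1 H3; rewrite addr0.
have Hq : 0 <=L np join x + np join y by have := ladd2 HBL H2 H4; rewrite addr0.
rewrite (dual_abs_diff Hp Hq); last first.
  by rewrite -{1}(ppnp HBL x) -{1}(ppnp HBL y) opprD addrACA.
rewrite !P_add // !DA_def; lra.
Qed.

Lemma DA_scale (a : R) x : DA (a *: x) = a * DA x.
Proof.
have H1 := pp_ge0 HBL x; have H2 := np_ge0 HBL x.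
have [a0|a0] := leP 0 a.
  rewrite (@dual_abs_diff (a *: pp join x) (a *: np join x)).
  - by rewrite !P_scale // DA_def mulrBr.
  - exact (lscale0 HBL a0 H1).
  - exact (lscale0 HBL a0 H2).
  - by rewrite -scalerBr (ppnp HBL x).
have na0 : 0 <= - a by rewrite oppr_ge0 ltW.
rewrite (@dual_abs_diff ((- a) *: np join x) ((- a) *: pp join x)).
- by rewrite !P_scale // DA_def; lra.
- exact (lscale0 HBL na0 H2).
- exact (lscale0 HBL na0 H1).
- by rewrite -scalerBr -opprB scalerN scaleNr opprK (ppnp HBL x).
Qed.

Lemma norm_pp x : `|pp join x| <= `|x|.
Proof.
apply: (bl_norm HBL); rewrite (abs_pos HBL (pp_ge0 HBL x)); exact (pp_le_abs HBL x).
Qed.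
Lemma norm_np x : `|np join x| <= `|x|.
Proof.
apply: (bl_norm HBL); rewrite (abs_pos HBL (np_ge0 HBL x)); exact (np_le_abs HBL x).
Qed.

Lemma DA_bnd x : `|DA x| <= K * `|x|.
Proof.
have H1 := pp_ge0 HBL x; have H2 := np_ge0 HBL x.
have A1 := P_ge0 H1; have A2 := P_ge0 H2.
have B1 := le_trans (P_leK H1) (ler_wpM2l K0 (norm_pp x)).
have B2 := le_trans (P_leK H2) (ler_wpM2l K0 (norm_np x)).
rewrite DA_def ler_norml; apply/andP; split; lra.
Qed.

Lemma DA_dom x y : abs x <=L abs y -> `|f x| <= DA (abs y).
Proof.
move=> H; have Ha := abs_ge0 HBL y; have H0 : 0 <=L (0 : E) := lrefl HBL 0.
rewrite (@dual_abs_diff (abs y) 0) //; last by rewrite subr0.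
rewrite P0 subr0 ler_norml; apply/andP; split.
  rewrite lerNl -fN; apply: P_ub => //; by rewrite (absN HBL).
exact: P_ub.
Qed.
End Func.

Section C0.
Variable R : realType.
Lemma weak_cvgP (F : set_system (c0_weak R)) (FF : Filter F) (h : c0_weak R) :
  (forall phi : c0_dual R, (proj1_sig phi) @ F --> proj1_sig phi h) -> F --> h.
Proof.
move=> H; apply/cvg_sup => phi A /=.
rewrite (@nbhsE (initial_topology (proj1_sig phi))) => -[B [[C oC <-] Bh] BA].
apply: (filterS BA); apply: (H phi); exact: open_nbhs_nbhs.
Qed.

Lemma weak_cont (phi : c0_dual R) : continuous (proj1_sig phi : c0_weak R -> R).
Proof.
move=> h.
have [+ _] := @cvg_sup _ _ (fun phi : c0_dual R =>
    Topological.class (initial_topology (proj1_sig phi))) (nbhs (h : c0_weak R)) h (@nbhs_filter (c0_weak R) h).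
move=> /(_ (@cvg_id _ _)) /(_ phi) H A /= Ah.
apply: H.
exact: (@initial_continuous _ _ (proj1_sig phi) h).
Qed.
End C0.
Section C0b.
Variable R : realType.
Implicit Types u v : c0 R.

Lemma c0_cvg u : c0val u n @[n --> \oo] --> 0.
Proof. exact/asboolP/c0valP. Qed.

Lemma c0_bnd u : exists M, forall n, `|c0val u n| <= M.
Proof.
have : cvgn (c0val u) by apply/cvg_ex; exists 0; exact: c0_cvg.
move=> /cvg_seq_bounded [M0 [_ HM]].
by exists (M0 + 1) => n; apply: (HM (M0 + 1)) => //; rewrite ltrDl.
Qed.

Lemma c0norm_ge u n : `|c0val u n| <= c0norm u.
Proof.
have [M HM] := c0_bnd u.
apply: ub_le_sup; first by exists M => _ [k _ <-].
by exists n.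
Qed.

Lemma c0norm_le u M : (forall n, `|c0val u n| <= M) -> c0norm u <= M.
Proof.
move=> HM; apply: ge_sup; first by exists `|c0val u 0|, 0%N.
by move=> _ [k _ <-].
Qed.

Lemma c0norm_ge0 u : 0 <= c0norm u.
Proof. exact: le_trans (normr_ge0 _) (c0norm_ge u 0). Qed.

Lemma dom0 (w a : nat -> R) : (forall n, `|w n| <= `|a n|) ->
  a n @[n --> \oo] --> 0 -> w n @[n --> \oo] --> 0.
Proof.
move=> Hd Ha; apply/cvgr0Pnorm_lt => e e0.
have H : \forall t \near \oo, `|a t| < e by apply: (@cvgr0_norm_lt _ _ _ _ _ a Ha e e0).
near=> n; rewrite (le_lt_trans (Hd n)) //; exact: (near H n).
Unshelve. all: end_near.
Qed.

Lemma ev0 (w : nat -> R) N : (forall n, (N <= n)%N -> w n = 0) ->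
  w n @[n --> \oo] --> 0.
Proof.
move=> H; apply/cvgr0Pnorm_lt => e e0.
by exists N => // n /= Hn; rewrite H // normr0.
Qed.

Definition mkc0 (w : nat -> R) (H : w n @[n --> \oo] --> 0) : c0 R :=
  @C0 R w (asboolT H).

Lemma lin_cvg (a : R) u v : (a * c0val u n + c0val v n) @[n --> \oo] --> 0.
Proof.
have -> : 0 = a * 0 + 0 :> R by rewrite mulr0 addr0.
apply: cvgD; last exact: c0_cvg.
exact: cvgMr (c0_cvg u).
Qed.

Definition c0lin (a : R) u v : c0 R := mkc0 (lin_cvg a u v).

Lemma sg_cvg (s : nat -> R) u :
  (if 0 <= s n then c0val u n else - c0val u n) @[n --> \oo] --> 0.
Proof.
apply: (dom0 (a := c0val u)); last exact: c0_cvg.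
by move=> n; case: ifP => _; rewrite ?normrN.
Qed.
Definition c0sg (s : nat -> R) u : c0 R := mkc0 (sg_cvg s u).

Lemma tail_cvg N u : (if (n < N)%N then 0 else c0val u n) @[n --> \oo] --> 0.
Proof.
apply: (dom0 (a := c0val u)); last exact: c0_cvg.
by move=> n; case: ifP => _; rewrite ?normr0.
Qed.
Definition c0tail N u : c0 R := mkc0 (tail_cvg N u).

Lemma trunc_cvg N u : (if (n < N)%N then c0val u n else 0) @[n --> \oo] --> 0.
Proof. by apply: (ev0 (N := N)) => n; case: ltnP. Qed.
Definition c0trunc N u : c0 R := mkc0 (trunc_cvg N u).

Lemma e_cvg k : (if n == k then 1 else 0 : R) @[n --> \oo] --> 0.
Proof.
apply: (ev0 (N := k.+1)) => n Hn; case: eqP => // E.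
by move: Hn; rewrite E ltnn.
Qed.
Definition c0e k : c0 R := mkc0 (e_cvg k).

Definition coord k (u : c0 R) : R := c0val u k.
Lemma coord_dual k : c0_dual_elem (coord k).
Proof.
split; first by move=> u v a w H; rewrite /coord H.
by exists 1 => u; rewrite mul1r /coord c0norm_ge.
Qed.
Definition coordD k : c0_dual R := exist _ (coord k) (coord_dual k).

End C0b.
Arguments c0e {R} k. Arguments coordD {R} k. Arguments coord {R} k u.
Section C0c.
Variable R : realType.
Implicit Types u v : c0 R.

Lemma c0_eq u v : (forall n, c0val u n = c0val v n) -> u = v.
Proof. by move=> H; apply: val_inj; apply/funext. Qed.

Lemma coord_near (p : c0_weak R) k (e : R) : 0 < e ->
  \forall t \near p, `|c0val p k - c0val (t : c0 R) k| < e.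
Proof. by move=> e0; apply: (@cvgr_dist_lt _ _ _ _ _ _ _ (@weak_cont R (coordD k) p) e e0). Qed.

Lemma c0_weak_hausdorff : hausdorff_space (c0_weak R).
Proof.
move=> p q cl; apply: c0_eq => k; apply/eqP; apply/negPn/negP => Hne.
have d0 : 0 < `|c0val p k - c0val q k| by rewrite normr_gt0 subr_eq0.
have e2 : 0 < `|c0val p k - c0val q k| / 2 by rewrite divr_gt0.
have [t [At Bt]] := cl _ _ (coord_near p k e2) (coord_near q k e2).
have : `|c0val p k - c0val q k| < `|c0val p k - c0val q k| / 2 + `|c0val p k - c0val q k| / 2.
  rewrite {1}(_ : c0val p k - c0val q k = (c0val p k - c0val t k) + (c0val t k - c0val q k)); last first.
    by rewrite addrA subrK.
  apply: (le_lt_trans (ler_normD _ _)); apply: ltrD => //.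
  by rewrite distrC.
by rewrite -splitr ltxx.
Qed.

Section Phi.
Variable phi : c0 R -> R.
Hypothesis Hphi : c0_dual_elem phi.

Lemma phi_lin (a : R) u v w : (forall n, c0val w n = a * c0val u n + c0val v n) ->
  phi w = a * phi u + phi v.
Proof. by case: Hphi => H _; exact: H. Qed.

Lemma phi0 w : (forall n, c0val w n = 0) -> phi w = 0.
Proof.
move=> H; have := @phi_lin 1 w w w; rewrite mul1r => /(_ _) E.
have {}E : phi w = phi w + phi w by apply: E => n; rewrite H mulr0 addr0.
lra.
Qed.

Definition Cp := let: exist C _ := cid (proj2 Hphi) in Num.max C 0.

Lemma Cp_ge0 : 0 <= Cp.
Proof. by rewrite /Cp; case: cid => C _; rewrite le_max lexx orbT. Qed.

Lemma phi_bnd u : `|phi u| <= Cp * c0norm u.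
Proof.
rewrite /Cp; case: cid => C HC; apply: (le_trans (HC u)).
by apply: ler_wpM2r; [exact: c0norm_ge0 | rewrite le_max lexx].
Qed.

Lemma phi_split N u : phi u = phi (c0trunc N u) + phi (c0tail N u).
Proof.
rewrite -[phi (c0trunc N u)]mul1r; apply: phi_lin => n /=.
by rewrite mul1r; case: ifP; rewrite ?addr0 ?add0r.
Qed.

Definition coef k := phi (c0e k).

Lemma phi_trunc N u : phi (c0trunc N u) = \sum_(k < N) c0val u k * coef k.
Proof.
elim: N => [|N IH].
  by rewrite big_ord0; apply: phi0.
rewrite big_ord_recr /= -IH addrC /coef; apply: phi_lin => n /=.
case: (ltngtP n N) => [lt|gt|->]; rewrite ?ltnS.
- by rewrite (ltnW lt) mulr0 add0r.
- by rewrite leqNgt gt mulr0 addr0.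
- by rewrite leqnn mulr1 addr0.
Qed.


Lemma c0_small u (e : R) : 0 < e -> exists N, forall n, (N <= n)%N -> `|c0val u n| <= e.
Proof.
move=> e0; have := @cvgr0_norm_le _ _ _ _ _ (c0val u) (c0_cvg u) e e0.
move=> /(_ _) [N _ HN]; by exists N => n Hn; apply: HN.
Qed.

Lemma phi_tail_small u (e : R) : 0 < e ->
  exists N, forall M, (N <= M)%N -> `|phi (c0tail M u)| <= Cp * e.
Proof.
move=> e0; have [N HN] := c0_small u e0; exists N => M HM.
apply: (le_trans (phi_bnd _)); apply: ler_wpM2l; first exact: Cp_ge0.
apply: c0norm_le => n /=; case: ltnP => Hn; first by rewrite normr0 ltW.
by apply: HN; exact: leq_trans HM Hn.
Qed.

Lemma phi_pos w : (forall n, 0 <= coef n * c0val w n) -> 0 <= phi w.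
Proof.
move=> H; apply/ler_addgt0Pr => e e0.
have Cp0 := Cp_ge0.
have e1 : 0 < e / (Cp + 1) by rewrite divr_gt0 // ltr_wpDl.
have [N HN] := phi_tail_small w e1.
have S : 0 <= \sum_(k < N) c0val w k * coef k.
  by apply: sumr_ge0 => k _; rewrite mulrC.
have T : `|phi (c0tail N w)| <= e.
  apply: (le_trans (HN N (leqnn N))).
  rewrite mulrA ler_pdivrMr ?ltr_wpDl //; nra.
move: T; rewrite ler_norml => /andP [T1 _].
rewrite (phi_split N w) phi_trunc.
lra.
Qed.
End Phi.
End C0c.
Section Chi.
Variable R : realType.
Variable phi : c0 R -> R.
Hypothesis Hphi : c0_dual_elem phi.

Definition chiF N (w : c0 R) : R := phi (c0tail N (c0sg (coef phi) w)).

Lemma chi_dual N : c0_dual_elem (chiF N).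
Proof.
split.
  move=> u v a w H; rewrite /chiF; apply: (phi_lin Hphi) => n /=.
  case: ltnP => _; first by rewrite mulr0 addr0.
  by case: ifP => _; rewrite H // opprD mulrN.
exists (Cp Hphi) => w; rewrite /chiF; apply: (le_trans (phi_bnd Hphi _)).
apply: ler_wpM2l; first exact: Cp_ge0.
apply: c0norm_le => n /=; case: ltnP => _; first by rewrite normr0 c0norm_ge0.
by case: ifP => _; rewrite ?normrN c0norm_ge.
Qed.

Definition chiD N : c0_dual R := exist _ (chiF N) (chi_dual N).

Lemma dom_tail N (h g : c0 R) : (forall n, `|c0val h n| <= c0val g n) ->
  `|phi (c0tail N h)| <= chiF N g.
Proof.
move=> Hd; rewrite ler_norml; apply/andP; split.
  have := @phi_lin _ _ Hphi 1 (c0tail N h) (c0tail N (c0sg (coef phi) g))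
     (c0lin 1 (c0tail N h) (c0tail N (c0sg (coef phi) g))) (fun n => erefl).
  rewrite mul1r => E.
  have : 0 <= phi (c0lin 1 (c0tail N h) (c0tail N (c0sg (coef phi) g))).
    apply: (phi_pos Hphi) => n /=; case: ltnP => _; first by rewrite mulr0 addr0 mulr0.
    have := Hd n; rewrite ler_norml => /andP [H1 H2].
    case: ifP => Hc; nra.
  rewrite E /chiF; lra.
have := @phi_lin _ _ Hphi (-1) (c0tail N h) (c0tail N (c0sg (coef phi) g))
   (c0lin (-1) (c0tail N h) (c0tail N (c0sg (coef phi) g))) (fun n => erefl).
move=> E.
have : 0 <= phi (c0lin (-1) (c0tail N h) (c0tail N (c0sg (coef phi) g))).
  apply: (phi_pos Hphi) => n /=; case: ltnP => _; first by rewrite mulr0 addr0 mulr0.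
  have := Hd n; rewrite ler_norml => /andP [H1 H2].
  case: ifP => Hc; nra.
rewrite E /chiF; lra.
Qed.
End Chi.
Lemma ultra_clus_cvg (T : Type) (U : topologicalType) (F : set_system T)
  (f : T -> U) (p : U) : UltraFilter F -> cluster (f @ F) p -> f @ F --> p.
Proof.
move=> UF cl A Ap; case: (in_ultra_setVsetC (f @^-1` A) UF) => // HC.
have [x [nAx Ax]] := cl (~` A) A HC Ap.
by case: nAx.
Qed.

Section Compact.
Variable R : realType.
Variable Kc : set (c0_weak R).

Definition domK : set (c0_weak R) :=
  [set h | exists2 g : c0_weak R, Kc g & forall n, `|c0val h n| <= c0val g n].

Definition gsel (h : c0_weak R) : c0_weak R :=
  match pselect (exists2 g : c0_weak R, Kc g & forall n, `|c0val h n| <= c0val g n) with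
  | left P => s2val (cid2 P)
  | right _ => h end.

Lemma gselP h : domK h -> Kc (gsel h) /\ forall n, `|c0val h n| <= c0val (gsel h) n.
Proof.
rewrite /gsel; case: pselect => // P _.
by case: (cid2 P) => g /= H1 H2.
Qed.

Lemma sum_cvg (F : set_system (c0_weak R)) (FF : Filter F) (hs : nat -> R) (c : nat -> R) N :
  (forall k, (fun h : c0_weak R => c0val h k) @ F --> hs k) ->
  (fun h : c0_weak R => \sum_(k < N) c0val h k * c k) @ F --> \sum_(k < N) hs k * c k.
Proof.
move=> Hk; elim: N => [|N IH].
  rewrite big_ord0; under eq_fun do rewrite big_ord0; exact: cvg_cst.
rewrite big_ord_recr /=; under eq_fun do rewrite big_ord_recr /=.
apply: cvgD => //; exact: cvgMl.
Qed.
End Compact.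
Section Compact2.
Variable R : realType.
Variable Kc : set (c0_weak R).

Lemma domK_compact : compact Kc -> compact (domK Kc).
Proof.
move=> cK; rewrite compact_ultra => F UF FK.
have PF : ProperFilter F by apply: ultra_proper.
have FF : Filter F by apply: PF.
have G_Kc : F (gsel Kc @^-1` Kc) by apply: filterS FK => h Hh; exact: (gselP Hh).1.
have [gs [Kgs clgs]] := cK (gsel Kc @ F) _ G_Kc.
have Cg : gsel Kc @ F --> gs := ultra_clus_cvg UF clgs.
have Cphi : forall phi : c0_dual R,
    (fun h => sval phi (gsel Kc h)) @ F --> sval phi gs.
  by move=> phi; apply: (cvg_comp _ _ Cg (@weak_cont R phi gs)).
have Cgn : forall n, (fun h => c0val (gsel Kc h) n) @ F --> c0val gs n.
  by move=> n; exact: (Cphi (coordD n)).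
have Hex : forall n : nat, exists c : R, (fun h : c0_weak R => c0val h n) @ F --> c.
  move=> n; pose M := c0val gs n + 1.
  have E1 : \forall h \near F, `|c0val gs n - c0val (gsel Kc h) n| < 1.
    by apply: (@cvgr_dist_lt _ _ _ _ _ _ _ (Cgn n) 1 ltr01).
  have seg : F ((fun h : c0_weak R => c0val h n) @^-1` `[-M, M]).
    near=> h; have Kh : domK Kc h by exact: (near FK h).
    have [_ Hd] := gselP Kh.
    have E1h : `|c0val gs n - c0val (gsel Kc h) n| < 1 by exact: (near E1 h).
    move: E1h; have := Hd n.
    rewrite /= in_itv /= -ler_norml /M => H1 H2.
    move: H2; rewrite ltr_norml => /andP [H2 _].
    lra.
  have [c [_ clc]] := @segment_compact R (-M) M ((fun h : c0_weak R => c0val h n) @ F) _ seg.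
  by exists c; exact: ultra_clus_cvg UF clc.
pose hs n := projT1 (cid (Hex n)).
have Chs : forall n, (fun h : c0_weak R => c0val h n) @ F --> hs n.
  by move=> n; rewrite /hs; case: cid.
have Hle : forall n, `|hs n| <= c0val gs n.
  move=> n.
  have C1 : (fun h : c0_weak R => `|c0val h n|) @ F --> `|hs n| by apply: cvg_norm; exact: Chs.
  apply: (@ler_cvg_to _ F PF R _ _ _ _ C1 (Cgn n)).
  near=> h; have Kh : domK Kc h by exact: (near FK h).
  by have [_ Hd] := gselP Kh; exact: Hd.
have hs0 : hs n @[n --> \oo] --> 0.
  apply: (dom0 (a := c0val gs)); last exact: c0_cvg.
  by move=> n; exact: le_trans (Hle n) (ler_norm _).
pose hst := mkc0 hs0.
exists (hst : c0_weak R); split; first by exists gs.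
apply: weak_cvgP => phi; have Hph := svalP phi; set ph := sval phi in Hph *.
apply/cvgrPdist_lt => e e0.
have Cp0 := Cp_ge0 Hph.
have e'0 : 0 < e / 5 by rewrite divr_gt0.
have e10 : 0 < (e / 5) / (Cp Hph + 1) by rewrite divr_gt0 // ltr_wpDl.
have Ce1 : Cp Hph * ((e / 5) / (Cp Hph + 1)) <= e / 5.
  rewrite mulrA ler_pdivrMr ?ltr_wpDl //; nra.
have [N1 HN1] := phi_tail_small Hph hst e10.
have [N2 HN2] := phi_tail_small Hph (c0sg (coef ph) gs) e10.
pose N := maxn N1 N2.
have T1 : `|ph (c0tail N hst)| <= e / 5.
  by apply: le_trans Ce1; apply: HN1; rewrite leq_maxl.
have T2 : `|chiF ph N gs| <= e / 5.
  by apply: le_trans Ce1; apply: HN2; rewrite leq_maxr.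
have C1 : (fun h => chiF ph N (gsel Kc h)) @ F --> chiF ph N gs := Cphi (chiD Hph N).
have C2 := @sum_cvg R F FF hs (coef ph) N Chs.
have A1 : \forall h \near F, `|chiF ph N gs - chiF ph N (gsel Kc h)| < e / 5.
  by apply: (@cvgr_dist_lt _ _ _ _ _ _ _ C1 _ e'0).
have A2 : \forall h \near F, `|\sum_(k < N) hs k * coef ph k -
     \sum_(k < N) c0val h k * coef ph k| < e / 5.
  by apply: (@cvgr_dist_lt _ _ _ _ _ _ _ C2 _ e'0).
near=> h.
have Kh : domK Kc h by exact: (near FK h).
have [_ Hd] := gselP Kh.
have D := dom_tail Hph N Hd.
have A1h : `|chiF ph N gs - chiF ph N (gsel Kc h)| < e / 5 by exact: (near A1 h).
have A2h : `|\sum_(k < N) hs k * coef ph k -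
     \sum_(k < N) c0val h k * coef ph k| < e / 5 by exact: (near A2 h).
rewrite (phi_split Hph N hst) (phi_split Hph N h) !(phi_trunc Hph).
move: T1 T2 D A1h A2h; rewrite !ler_norml !ltr_norml.
move=> /andP [T1a T1b] /andP [T2a T2b] /andP [Da Db] /andP [A1a A1b] /andP [A2a A2b].
rewrite /=; lra.
Unshelve. all: end_near.
Qed.
End Compact2.
Lemma lin_bnd_cont (R : realType) (E : completeNormedModType R) (g : E -> R) (K : R) :
  0 <= K -> (forall x y, g (x + y) = g x + g y) ->
  (forall x, `|g x| <= K * `|x|) -> continuous g.
Proof.
move=> K0 gadd gb x; apply/cvgrPdist_lt => e e0.
have e1 : 0 < e / (K + 1) by rewrite divr_gt0 // ltr_wpDl.
have N : \forall y \near x, `|x - y| < e / (K + 1).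
  by apply: (@cvgr_dist_lt _ _ _ _ _ _ _ (@cvg_id _ (nbhs x)) _ e1).
near=> y.
have Hy : `|x - y| < e / (K + 1) by exact: (near N y).
have -> : g x = g (x - y) + g y by rewrite -gadd subrK.
rewrite addrK.
apply: (le_lt_trans (gb _)).
apply: (le_lt_trans (ler_wpM2l K0 (ltW Hy))).
rewrite mulrA ltr_pdivrMr ?ltr_wpDl //; nra.
Unshelve. all: end_near.
Qed.

Unset Implicit Arguments.
Set Strict Implicit.

Theorem mainTheorem11 (R : realType) (E : completeNormedModType R)
  (le : E -> E -> Prop) (join : E -> E -> E)
  (HBL : banach_lattice le join)
  (Hdual : dual_lattice_weakstar_seq_cont le join)
  (A : set E) :
  grothendieck_set (lat_abs join @` A) <-> grothendieck_set (solid_hull le join A).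
Proof.
split; last first.
  move=> H T HT; have := H T HT; rewrite /rel_weakly_compact_c0 => cK.
  have cc : closed (closure (T @` (lat_abs join @` A) : set (c0_weak R))) by exact: closed_closure.
  apply (subclosed_compact cc cK); apply: closureS.
  move=> _ [_ [y Ay <-] <-]; exists (lat_abs join y) => //; exists y => //.
  rewrite (abs_abs HBL); exact (lrefl HBL _).
move=> H T [Tadd Tscal [C HC]].
pose Cq := Num.max C 0.
have Cq0 : 0 <= Cq by rewrite le_max lexx orbT.
pose f n x := c0val (T x) n.
have fadd : forall n x y, f n (x + y) = f n x + f n y by move=> n x y; exact: Tadd.
have fscal : forall n (a : R) x, f n (a *: x) = a * f n x by move=> n a x; exact: Tscal.
have fbnd : forall n x, `|f n x| <= Cq * `|x|.
  move=> n x; apply: le_trans (c0norm_ge (T x) n) _; apply: le_trans (HC x) _.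
  by apply: ler_wpM2r; [exact: normr_ge0 | rewrite le_max lexx].
have fdual : forall n, dual_elem (f n).
  move=> n; split; [exact: fadd | exact: fscal | exact: lin_bnd_cont Cq0 (fadd n) (fbnd n)].
have fcvg : forall x, f n x @[n --> \oo] --> 0 by move=> x; exact: c0_cvg.
pose Tabs (x : E) : c0 R := mkc0 (Hdual f fdual fcvg x).
have HTabs : bounded_op_c0 Tabs.
  split.
  - by move=> x y n; exact: (DA_add HBL (fadd n) Cq0 (fbnd n)).
  - by move=> a x n; exact: (DA_scale HBL (fadd n) (fscal n) Cq0 (fbnd n)).
  - exists Cq => x; apply: c0norm_le => n; exact: (DA_bnd HBL (fscal n) Cq0 (fbnd n)).
have cK := H Tabs HTabs; rewrite /rel_weakly_compact_c0 in cK *.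
pose Kc := closure (Tabs @` (lat_abs join @` A) : set (c0_weak R)).
have cD := @domK_compact R Kc cK.
have clD : closed (domK Kc) := compact_closed (@c0_weak_hausdorff R) cD.
have cc : closed (closure (T @` (solid_hull le join A) : set (c0_weak R))) by exact: closed_closure.
apply (subclosed_compact cc cD).
have Eq : domK Kc = closure (domK Kc) := (closure_id _).1 clD.
rewrite Eq; apply: closureS.
move=> _ [x [y Ay Hxy] <-].
exists (Tabs (lat_abs join y)).
  apply: subset_closure; exists (lat_abs join y) => //; by exists y.
move=> n; exact: (DA_dom HBL (fadd n) (fscal n) Cq0 (fbnd n) Hxy).
Qed.
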